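(* Let $A$ be a real unital $^*$-algebra with underlying vector space $\mathbb{R}^n$ whose Hermitian elements are real, and let $N(s)=ss^*$ be its Algebraic Norm. Then, on a sufficiently small neighborhood of $\mathbf{1}$, $N(s)$ is the square of a special unital norm of $A$; that is, $\sqrt{N(s)}$ is a special unital norm.
   Context: $A$ is a real unital algebra (bilinear product, not necessarily associative) on $\mathbb{R}^n$ with the standard basis, equipped with an involutive antiautomorphism $s\mapsto s^*$ (linear, $(st)^*=t^*s^*$, $s^{**}=s$) such that every $s$ with $s^*=s$ is a real multiple of the identity $\mathbf{1}$; then $ss^*=s^*s$ is real, and for $ss^*\neq0$ the inverse is $s^{-1}=s^*/(ss^* )$. The Algebraic Norm is $N(s)=ss^*\in\mathbb{R}$. For these algebras one sets $\|\mathbf{1}\|^2=1$. With $s$ a column vector, $\mathbf{d}s$ the column of coordinate differentials and ''$\cdot$'' the Euclidean dot product: a normalized uncurling metric is a real symmetric $n\times n$ matrix $L$ with $d\big((s^{-1})^TL\,\mathbf{d}s\big)=0$ on an open ball centered at $\mathbf{1}$ consisting of units and with $s^TLs^{-1}=\|\mathbf{1}\|^2$ near $\mathbf{1}$; the associated special unital norm is $\ell_{\rm sp}(s)=\exp\!\big(\frac{1}{\|\mathbf{1}\|^2}\int_{\mathbf{1}}^s[Lt^{-1}]\cdot\mathbf{d}t\big)$ near $\mathbf{1}$. *)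

(* Defs.v *)
From HB Require Import structures.
From mathcomp Require Import all_boot all_order all_algebra.
From mathcomp Require Import all_classical all_reals all_analysis.
Set Implicit Arguments. Unset Strict Implicit. Unset Printing Implicit Defensive.
Import Order.TTheory GRing.Theory Num.Theory.
Import numFieldNormedType.Exports.
Local Open Scope classical_set_scope.
Local Open Scope ring_scope.

Definition vdot (R : realType) (n : nat) (u v : 'cV[R]_n) : R :=
  \sum_(i < n) u i 0 * v i 0.

Definition eball (R : realType) (n : nat) (c : 'cV[R]_n) (r : R) (s : 'cV[R]_n) : Prop :=
  \sum_(i < n) (s i 0 - c i 0) ^+ 2 < r ^+ 2.

(* The standing assumptions: a real unital algebra (bilinear, not necessarily
   associative) on R^n, with an involutive linear antiautomorphism whose
   Hermitian (self-adjoint) elements are real multiples of the identity. *)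
Definition real_star_algebra (R : realType) (n : nat)
  (mul : 'cV[R]_n -> 'cV[R]_n -> 'cV[R]_n) (one : 'cV[R]_n)
  (star : 'cV[R]_n -> 'cV[R]_n) : Prop :=
  (forall (a : R) x y z, mul (a *: x + y) z = a *: mul x z + mul y z) /\
      (forall (a : R) x y z, mul z (a *: x + y) = a *: mul z x + mul z y) /\
      (forall x, mul one x = x /\ mul x one = x) /\
      one != 0 /\
      (forall (a : R) x y, star (a *: x + y) = a *: star x + star y) /\
      (forall x y, star (mul x y) = mul (star y) (star x)) /\
      (forall x, star (star x) = x) /\
      (forall x, star x = x -> exists c : R, x = c *: one).

(* N is the Algebraic Norm: s star(s) = N(s) 1 (N(s) is well defined since 1 <> 0). *)
Definition is_algebraic_norm (R : realType) (n : nat)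
  (mul : 'cV[R]_n -> 'cV[R]_n -> 'cV[R]_n) (one : 'cV[R]_n)
  (star : 'cV[R]_n -> 'cV[R]_n) (N : 'cV[R]_n -> R) : Prop :=
  forall s, mul s (star s) = N s *: one.

(* s^{-1} = star(s) / N(s), meaningful when N s <> 0 (s is a unit). *)
Definition ainv (R : realType) (n : nat) (star : 'cV[R]_n -> 'cV[R]_n)
  (N : 'cV[R]_n -> R) (s : 'cV[R]_n) : 'cV[R]_n :=
  (N s)^-1 *: star s.

(* The 1-form (s^{-1})^T L ds, written as the coefficient column L s^{-1}
   (L symmetric). *)
Definition uform (R : realType) (n : nat) (star : 'cV[R]_n -> 'cV[R]_n)
  (N : 'cV[R]_n -> R) (L : 'M[R]_n) (s : 'cV[R]_n) : 'cV[R]_n :=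
  L *m ainv star N s.

(* Normalized uncurling metric (with ||1||^2 = 1), closedness holding on the
   open ball of radius r0 centered at 1, which consists of units. *)
Definition normalized_uncurling_metric (R : realType) (n : nat)
  (one : 'cV[R]_n) (star : 'cV[R]_n -> 'cV[R]_n) (N : 'cV[R]_n -> R)
  (L : 'M[R]_n) (r0 : R) : Prop :=
  [/\ L^T = L, 0 < r0,
      (forall s, eball one r0 s -> N s != 0),
      (* d((s^{-1})^T L ds) = 0 on the ball *)
      (forall s, eball one r0 s -> forall i j : 'I_n,
          derivable (fun t => uform star N L t i 0) s (delta_mx j 0) /\
          derivable (fun t => uform star N L t j 0) s (delta_mx i 0) /\
          'D_(delta_mx j 0) (fun t => uform star N L t i 0) s =
          'D_(delta_mx i 0) (fun t => uform star N L t j 0) s) &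
      (* s^T L s^{-1} = ||1||^2 = 1 near 1 *)
      (exists r1 : R, 0 < r1 /\ forall s, eball one r1 s ->
          vdot s (L *m ainv star N s) = 1)].

(* The associated special unital norm: exp of the line integral of the closed
   form from 1 to s (taken along the segment [1, s], which lies in the ball;
   path independent there since the form is closed). ||1||^2 = 1. *)
Definition special_unital_norm (R : realType) (n : nat)
  (one : 'cV[R]_n) (star : 'cV[R]_n -> 'cV[R]_n) (N : 'cV[R]_n -> R)
  (L : 'M[R]_n) (s : 'cV[R]_n) : R :=
  expR (\int[@lebesgue_measure R]_(t in `[0%R, 1%R])
          vdot (uform star N L (one + t *: (s - one))) (s - one)).

(* Main.v *)
Require Import Defs.
From HB Require Import structures.
From mathcomp Require Import all_boot all_order all_algebra.
From mathcomp Require Import all_classical all_reals all_analysis.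
From mathcomp Require Import ring lra.
Import Order.TTheory GRing.Theory Num.Theory.
Import numFieldNormedType.Exports.
Local Open Scope ring_scope.
Set Implicit Arguments. Unset Strict Implicit. Unset Printing Implicit Defensive.

Local Open Scope classical_set_scope.
Lemma is_derive_quad (R : realType) (V : normedModType R) (f : V -> R) (x v : V) (d c : R) :
  (forall h : R, f (h *: v + x) - f x = h * d + h ^+ 2 * c) -> is_derive x v f d.
Proof.
move=> H.
have E : (fun h => h^-1 *: ((f \o shift x) (h *: v) - f x)) @ 0^' --> d.
  apply: (@cvg_trans _ ((fun h : R => d + h * c) @ 0^')).
    apply: near_eq_cvg; near=> h.
    have hn0 : h != 0 by near: h; exact: nbhs_dnbhs_neq.
    rewrite /= /shift H /GRing.scale /=; field; exact: hn0.
  have C : (fun h : R => d + h * c) @ 0 --> d + 0 * c.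
    apply: cvgD; first exact: cvg_cst.
    apply: cvgMl; exact: cvg_id.
  rewrite mul0r addr0 in C.
  exact: cvg_within_filter C.
apply: DeriveDef; first by apply/cvg_ex; exists d.
exact: cvg_lim E.
Unshelve. all: by end_near.
Qed.

Section Alg.
Variables (R : realType) (n : nat)
  (mul : 'cV[R]_n -> 'cV[R]_n -> 'cV[R]_n) (one : 'cV[R]_n)
  (star : 'cV[R]_n -> 'cV[R]_n) (N : 'cV[R]_n -> R).
Hypothesis mulL : forall (a : R) x y z, mul (a *: x + y) z = a *: mul x z + mul y z.
Hypothesis mulR : forall (a : R) x y z, mul z (a *: x + y) = a *: mul z x + mul z y.
Hypothesis mul1 : forall x, mul one x = x /\ mul x one = x.
Hypothesis starL : forall (a : R) x y, star (a *: x + y) = a *: star x + star y.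
Hypothesis starM : forall x y, star (mul x y) = mul (star y) (star x).
Hypothesis starK : forall x, star (star x) = x.
Hypothesis herm : forall x, star x = x -> exists c : R, x = c *: one.
Hypothesis HN : forall s, mul s (star s) = N s *: one.
Variable k : 'I_n.
Hypothesis hk : one k 0 != 0.

Lemma mul0l z : mul 0 z = 0.
Proof. have H := mulL 1 0 0 z; rewrite !scale1r !addr0 in H.
by apply: (addrI (mul 0 z)); rewrite addr0 -H. Qed.
Lemma mul0r z : mul z 0 = 0.
Proof. have H := mulR 1 0 0 z; rewrite !scale1r !addr0 in H.
by apply: (addrI (mul z 0)); rewrite addr0 -H. Qed.
Lemma mulZl a x z : mul (a *: x) z = a *: mul x z.
Proof. by have := mulL a x 0 z; rewrite !addr0 mul0l addr0. Qed.
Lemma mulZr a x z : mul z (a *: x) = a *: mul z x.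
Proof. by have := mulR a x 0 z; rewrite !addr0 mul0r addr0. Qed.
Lemma mulDl x y z : mul (x + y) z = mul x z + mul y z.
Proof. by have := mulL 1 x y z; rewrite !scale1r. Qed.
Lemma mulDr x y z : mul z (x + y) = mul z x + mul z y.
Proof. by have := mulR 1 x y z; rewrite !scale1r. Qed.
Lemma mulNl x z : mul (- x) z = - mul x z.
Proof. by rewrite -scaleN1r mulZl scaleN1r. Qed.
Lemma mulNr x z : mul z (- x) = - mul z x.
Proof. by rewrite -scaleN1r mulZr scaleN1r. Qed.
Lemma star0 : star 0 = 0.
Proof. have H := starL 1 0 0; rewrite !scale1r !addr0 in H.
by apply: (addrI (star 0)); rewrite addr0 -H. Qed.
Lemma starZ a x : star (a *: x) = a *: star x.
Proof. by have := starL a x 0; rewrite !addr0 star0 addr0. Qed.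
Lemma starD x y : star (x + y) = star x + star y.
Proof. by have := starL 1 x y; rewrite !scale1r. Qed.
Lemma starN x : star (- x) = - star x.
Proof. by rewrite -scaleN1r starZ scaleN1r. Qed.
Lemma star1 : star one = one.
Proof.
have H x : star x = mul (star one) (star x).
  by rewrite -starM (proj2 (mul1 x)).
by have := H (star one); rewrite starK (proj2 (mul1 _)) => <-.
Qed.

Definition T (z : 'cV[R]_n) : R := (z + star z) k 0 / one k 0.

Lemma Tspec z : z + star z = T z *: one.
Proof.
have [c hc] : exists c : R, z + star z = c *: one.
  by apply: herm; rewrite starD starK addrC.
by rewrite hc /T hc mxE mulfK.
Qed.
Lemma TL a x y : T (a *: x + y) = a * T x + T y.
Proof. by rewrite /T starL !mxE; field. Qed.
Lemma TD x y : T (x + y) = T x + T y.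
Proof. by have := TL 1 x y; rewrite scale1r mul1r. Qed.
Lemma TZ a x : T (a *: x) = a * T x.
Proof. by rewrite /T starZ !mxE; field. Qed.
Lemma TN x : T (- x) = - T x.
Proof. by rewrite -scaleN1r TZ mulN1r. Qed.
Lemma Tstar x : T (star x) = T x.
Proof. by rewrite /T starK addrC. Qed.
Lemma Tone : T one = 2.
Proof. by rewrite /T star1 !mxE; field. Qed.

Lemma starE x : star x = T x *: one - x.
Proof. by rewrite -Tspec addrC addKr. Qed.

Lemma Tcomm x y : T (mul x y) = T (mul y x).
Proof.
suff E : mul x y + star (mul x y) = mul y x + star (mul y x).
  by move: E; rewrite !Tspec => /(congr1 (fun v : 'cV[R]_n => v k 0)); rewrite !mxE; exact: (mulIf hk).
rewrite !starM !starE.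
rewrite !(mulDl, mulDr, mulNl, mulNr, mulZl, mulZr).
rewrite !(proj1 (mul1 _)) !(proj2 (mul1 _)).
apply/matrixP => i j; rewrite !(mxE, scalerA); ring.
Qed.


Definition B x y := T (mul x (star y)) / 2.

Lemma NB s : N s = B s s.
Proof. by rewrite /B HN TZ Tone; field. Qed.
Lemma Bsym x y : B y x = B x y.
Proof. by rewrite /B -Tstar starM starK. Qed.
Lemma BL a x y z : B (a *: x + y) z = a * B x z + B y z.
Proof. by rewrite /B mulL TL; field. Qed.
Lemma BR a x y z : B z (a *: x + y) = a * B z x + B z y.
Proof. by rewrite -!(Bsym z) BL. Qed.
Lemma BDl x y z : B (x + y) z = B x z + B y z.
Proof. by have := BL 1 x y z; rewrite scale1r mul1r. Qed.
Lemma BZl a x z : B (a *: x) z = a * B x z.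
Proof. by rewrite /B mulZl TZ; field. Qed.
Lemma BNl x z : B (- x) z = - B x z.
Proof. by rewrite -scaleN1r BZl mulN1r. Qed.
Lemma BDr x y z : B z (x + y) = B z x + B z y.
Proof. by rewrite -!(Bsym z) BDl. Qed.
Lemma BZr a x z : B z (a *: x) = a * B z x.
Proof. by rewrite -!(Bsym z) BZl. Qed.
Lemma BNr x z : B z (- x) = - B z x.
Proof. by rewrite -!(Bsym z) BNl. Qed.

Definition e (j : 'I_n) : 'cV[R]_n := delta_mx j 0.

Lemma lin_sum (f : 'cV[R]_n -> R) :
  (forall a x y, f (a *: x + y) = a * f x + f y) ->
  forall x, f x = \sum_j x j 0 * f (e j).
Proof.
move=> fL x.
have f0 : f 0 = 0.
  have := fL 1 0 0; rewrite scale1r !addr0 mul1r => H.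
  by apply: (addrI (f 0)); rewrite addr0 -H.
have fD u v : f (u + v) = f u + f v by have := fL 1 u v; rewrite scale1r mul1r.
have fZ a u : f (a *: u) = a * f u by have := fL a u 0; rewrite !addr0 f0 addr0.
rewrite {1}(matrix_sum_delta x).
under eq_bigr do rewrite big_ord1.
apply: (big_ind2 (fun u v => f u = v)).
- exact: f0.
- by move=> a b c d H1 H2; rewrite fD H1 H2.
- by move=> i _; rewrite fZ.
Qed.

Definition L : 'M[R]_n := \matrix_(i, j) (T (mul (e i) (e j)) / 2).

Lemma LT : L^T = L.
Proof. by apply/matrixP => i j; rewrite !mxE Tcomm. Qed.

Lemma LstarE s i : (L *m star s) i 0 = B s (e i).
Proof.
rewrite Bsym /B.
rewrite (lin_sum (f := fun w => T (mul (e i) w) / 2)); last first.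
  by move=> a x y; rewrite mulR TL; field.
rewrite mxE; apply: eq_bigr => j _; rewrite mxE; exact: mulrC.
Qed.

Lemma uformE s i : uform star N L s i 0 = (N s)^-1 * B s (e i).
Proof. by rewrite /uform /ainv -scalemxAr mxE LstarE. Qed.

Lemma vdotE s x : vdot x (L *m ainv star N s) = (N s)^-1 * B s x.
Proof.
rewrite /vdot (lin_sum (f := B s)); last by move=> *; exact: BR.
rewrite mulr_sumr; apply: eq_bigr => i _.
by rewrite -/(uform star N L s) uformE; ring.
Qed.


Lemma derN s v : is_derive s v N (2 * B s v).
Proof.
apply: (@is_derive_quad _ _ _ _ _ _ (B v v)) => h.
rewrite !NB !(BDl, BDr, BZl, BZr) (Bsym v s); ring.
Qed.

Lemma derB w s v : is_derive s v (fun t => B t w) (B v w).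
Proof.
apply: (@is_derive_quad _ _ _ _ _ _ 0) => h.
rewrite !(BDl, BDr, BZl, BZr); ring.
Qed.

Definition G i := fun t => (N t)^-1 * B t (e i).

Lemma derG i s v : N s != 0 ->
  is_derive s v (G i) ((N s)^-1 * B v (e i) + B s (e i) * (- (N s) ^- 2 * (2 * B s v))).
Proof.
move=> nz.
have hV : is_derive s v (fun t => (N t)^-1) (- (N s) ^- 2 *: (2 * B s v)).
  have [dN vN] := derN s v.
  apply: DeriveDef; first exact: derivableV.
  by rewrite deriveV // vN.
have := is_deriveM hV (derB (e i) s v).
by rewrite /G.
Qed.

Lemma uformG i : (fun t => uform star N L t i 0) = G i.
Proof. by apply: funext => t; rewrite uformE. Qed.

Lemma closed_form s : N s != 0 -> forall i j : 'I_n,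
  derivable (fun t => uform star N L t i 0) s (delta_mx j 0) /\
  derivable (fun t => uform star N L t j 0) s (delta_mx i 0) /\
  'D_(delta_mx j 0) (fun t => uform star N L t i 0) s =
  'D_(delta_mx i 0) (fun t => uform star N L t j 0) s.
Proof.
move=> nz i j; rewrite !uformG.
have [d1 v1] := derG i (e j) nz.
have [d2 v2] := derG j (e i) nz.
split; first exact: d1.
split; first exact: d2.
rewrite -/(e j) -/(e i) v1 v2 (Bsym (e i) (e j)) /=; ring.
Qed.


Lemma N1 : N one = 1.
Proof. by rewrite NB /B star1 (proj1 (mul1 _)) Tone; field. Qed.

Definition K : R := \sum_j \sum_i (2 * `|one i 0| + 1) * `|B (e i) (e j)|.
Definition r0 : R := (2 * K + 2)^-1.

Lemma K_ge0 : 0 <= K.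
Proof.
apply: sumr_ge0 => j _; apply: sumr_ge0 => i _.
by apply: mulr_ge0 => //; apply: addr_ge0 => //; apply: mulr_ge0.
Qed.

Lemma r0_gt0 : 0 < r0.
Proof. by rewrite /r0 invr_gt0; have := K_ge0; lra. Qed.

Lemma r0_le1 : r0 <= 1.
Proof. rewrite /r0 invf_le1; have := K_ge0; lra. Qed.

Lemma r0K : r0 * K < 2^-1.
Proof.
have := K_ge0 => K0.
rewrite /r0 mulrC ltr_pdivrMr; last lra.
lra.
Qed.

Lemma ball_coord s r : 0 < r -> eball one r s -> forall j, `|s j 0 - one j 0| < r.
Proof.
move=> r0' hb j.
have H : (s j 0 - one j 0) ^+ 2 < r ^+ 2.
  apply: le_lt_trans hb.
  rewrite (bigD1 j) //= lerDl; apply: sumr_ge0 => i _; exact: sqr_ge0.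
have [x0|x0] := lerP 0 (s j 0 - one j 0).
  rewrite ger0_norm //; nra.
rewrite ltr0_norm //; nra.
Qed.

Lemma N_pos s : eball one r0 s -> 0 < N s.
Proof.
move=> hb.
set h := s - one.
have hj j : `|h j 0| <= r0 by rewrite /h !mxE; apply/ltW/ball_coord => //; exact: r0_gt0.
have hi i : `|(s + one) i 0| <= 2 * `|one i 0| + 1.
  have := hj i; rewrite /h !mxE => hh.
  have -> : s i 0 + one i 0 = (s i 0 - one i 0) + 2 * one i 0 by ring.
  apply: le_trans (ler_normD _ _) _.
  rewrite normrM (ger0_norm (_ : 0 <= 2 :> R)) //.
  have := r0_le1; lra.
have E : N s - 1 = B (s + one) h.
  by rewrite -N1 !NB /h !(BDl, BDr, BNr) (Bsym one s); ring.
have bound : `|N s - 1| <= r0 * K.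
  rewrite E (lin_sum (f := B (s + one))); last by move=> *; exact: BR.
  apply: le_trans (ler_norm_sum _ _ _) _.
  rewrite /K mulr_sumr; apply: ler_sum => j _.
  rewrite normrM; apply: ler_pM => //.
  rewrite (lin_sum (f := fun x => B x (e j))); last by move=> *; exact: BL.
  apply: le_trans (ler_norm_sum _ _ _) _.
  apply: ler_sum => i _; rewrite normrM; apply: ler_wpM2r => //.
have := r0K; have := bound; rewrite ler_norml; lra.
Qed.

Lemma ball_seg s r t : eball one r s -> 0 <= t <= 1 ->
  eball one r (one + t *: (s - one)).
Proof.
rewrite /eball => hb /andP[t0 t1].
rewrite (eq_bigr (fun i => t ^+ 2 * (s i 0 - one i 0) ^+ 2)); last first.
  by move=> i _; rewrite !mxE; ring.
rewrite -mulr_sumr.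
set S := \sum_i _ in hb *.
have S0 : 0 <= S by apply: sumr_ge0 => i _; exact: sqr_ge0.
apply: le_lt_trans hb.
have t2 : t ^+ 2 <= 1 by nra.
have : 0 <= S * (1 - t ^+ 2) by apply: mulr_ge0 => //; lra.
nra.
Qed.


Lemma vdotE' s x : vdot (uform star N L s) x = (N s)^-1 * B s x.
Proof.
rewrite -vdotE /vdot /uform; apply: eq_bigr => i _; exact: mulrC.
Qed.

Lemma andP_intro (a b : bool) : a -> b -> a && b.
Proof. by move=> -> ->. Qed.

Lemma main_integral s : eball one r0 s ->
  special_unital_norm one star N L s = Num.sqrt (N s).
Proof.
move=> hb.
set h := s - one.
set a := B one h.
set c := N h.
pose q := fun t : R => 1 + t * (2 * a) + t ^+ 2 * c.
have qE t : N (one + t *: h) = q t.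
  by rewrite /q /c /a !NB !(BDl, BDr, BZl, BZr, BNl, BNr) (Bsym s one) -(NB one) N1; ring.
have fE t : vdot (uform star N L (one + t *: h)) h = (q t)^-1 * (a + t * c).
  by rewrite vdotE' qE /a /c NB !(BDl, BZl).
have qpos t : 0 <= t <= 1 -> 0 < q t.
  by move=> ht; rewrite -qE; apply: N_pos; exact: ball_seg.
have dq (t : R) : is_derive t (1 : R) q (2 * a + 2 * t * c).
  apply: (@is_derive_quad _ _ _ _ _ _ c) => x.
  rewrite /q /GRing.scale /=; ring.
have dl (t : R) : is_derive t (1 : R) (fun t : R => a + t * c) c.
  apply: (@is_derive_quad _ _ _ _ _ _ 0) => x.
  rewrite /GRing.scale /=; ring.
pose f := fun t : R => (q t)^-1 * (a + t * c).
pose F := fun t : R => 2^-1 * ln (q t).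
have df (t : R) : 0 <= t <= 1 -> is_derive t (1 : R) f ((q t)^-1 * c + (a + t * c) * (- (q t) ^- 2 * (2 * a + 2 * t * c))).
  move=> ht.
  have hV := is_deriveV (lt0r_neq0 (qpos t ht)) (dq t).
  exact: is_deriveM hV (dl t).
have dF (t : R) : 0 <= t <= 1 -> is_derive t (1 : R) F (2^-1 * ((q t)^-1 * (2 * a + 2 * t * c))).
  move=> ht.
  have H1 := is_derive1_ln (qpos t ht).
  have H2 := is_derive1_comp H1 (dq t).
  have H3 := is_deriveZ (2^-1) H2.
  exact: H3.
rewrite /special_unital_norm -/h.
have -> : (fun t : R => vdot (uform star N L (one + t *: h)) h) = f.
  by apply: funext => t; rewrite fE.
rewrite /Rintegral (@continuous_FTC2 _ f F 0 1) //; last first.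
- move=> t; rewrite in_itv /= => /andP[t0 t1].
  have ht : 0 <= t <= 1 by rewrite !ltW.
  rewrite derive1E.
  have [_ ->] := dF t ht.
  have := qpos t ht; rewrite /f => qp.
  by field; rewrite lt0r_neq0.
- have cF (t : R) : 0 <= t <= 1 -> {for t, continuous F}.
    move=> ht; apply/differentiable_continuous/derivable1_diffP.
    by have [] := dF t ht.
  split.
  + move=> t; rewrite in_itv /= => /andP[t0 t1].
    by have [] := dF t (andP_intro (ltW t0) (ltW t1)).
  + by apply: cvg_at_right_filter; apply: cF; rewrite lexx ler01.
  + by apply: cvg_at_left_filter; apply: cF; rewrite lexx ler01.
- apply: derivable_within_continuous => t; rewrite in_itv /= => ht.
  by have [] := df t ht.
- have Ns : N s = q 1 by rewrite -qE scale1r /h addrC subrK.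
  have Npos : 0 < N s by apply: N_pos.
  rewrite -EFinB /= -powR12_sqrt ?ltW // /powR (negbTE (lt0r_neq0 Npos)).
  congr expR; rewrite /F Ns.
  have -> : q 0 = 1 by rewrite /q; ring.
  by rewrite ln1; ring.
Qed.

End Alg.

Unset Implicit Arguments.
Set Strict Implicit.

Theorem proposition10p8 (R : realType) (n : nat)
  (mul : 'cV[R]_n -> 'cV[R]_n -> 'cV[R]_n) (one : 'cV[R]_n)
  (star : 'cV[R]_n -> 'cV[R]_n) (N : 'cV[R]_n -> R) :
  real_star_algebra mul one star ->
  is_algebraic_norm mul one star N ->
  exists (L : 'M[R]_n) (r0 : R),
    normalized_uncurling_metric one star N L r0 /\
    exists r : R, 0 < r /\ r <= r0 /\
      forall s : 'cV[R]_n, eball one r s ->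
        special_unital_norm one star N L s = Num.sqrt (N s).
Proof.
move=> [mulL [mulR [mul1 [one0 [starL [starM [starK herm]]]]]]] HN.
have [k hk] : exists k, one k 0 != 0.
  case: (pickP (fun i => one i 0 != 0)) => [k hk|H]; first by exists k.
  exfalso; move/eqP: one0; apply; apply/matrixP => i j.
  by rewrite ord1 mxE; apply/eqP; move/negbFE: (H i).
have rpos := @r0_gt0 R n mul one star k.
have Npos : forall s, eball one (r0 mul one star k) s -> 0 < N s.
  by move=> s hs; apply: N_pos hs.
exists (L mul one star k), (r0 mul one star k).
split.
- split => //.
  + exact: LT.
  + by move=> s hs; apply: lt0r_neq0; apply: Npos.
  + move=> s hs i j; apply: closed_form => //.
    by apply: lt0r_neq0; apply: Npos.
  + exists (r0 mul one star k); split => // s hs.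
    rewrite (vdotE N) // -(NB (N := N)) // mulVf //.
    by apply: lt0r_neq0; apply: Npos.
- exists (r0 mul one star k); split => //; split => // s hs.
  exact: main_integral.
Qed.
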